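(* Let $C$ be a Reedy category and $\Gamma=\int N^{-,+}(C)$. Let $\Gamma_-$ be the wide subcategory consisting of the morphisms $(\sigma,\mathrm{id}_{X\circ\sigma})\colon([m],X\circ\sigma)\to([n],X)$ with $([n],X)\in\mathrm{Ob}\,\Gamma$ and $\sigma\colon[m]\to[n]$ surjective, and let $\Gamma_+$ be the wide subcategory of morphisms $(\delta,\theta)$ of $\Gamma$ with $\delta$ injective. Then $(\Gamma_-,\Gamma_+)$ is a Reedy structure on $\Gamma$.
   Context: $\Delta$: finite ordinals $[n]=\{0<\dots<n\}$, $n\ge0$, with order-preserving maps. A Reedy structure on a category $C$ is a pair $(C_-,C_+)$ of wide subcategories such that: every morphism factors uniquely as a morphism of $C_-$ followed by one of $C_+$; every morphism of $C_-$ and $C_+$ is decidably either an identity or not (equivalently each is obtained from a semicategory by freely adjoining identities); and the relation on objects ($x<'y$ iff there is a non-identity $x\to y$ in $C_+$ or a non-identity $y\to x$ in $C_-$) is well-founded. (The paper works constructively.) $\int N^{-,+}(C)$: objects $([n],X)$ with $X\colon[n]\to C$ a functor sending all morphisms into $C_-$; morphisms $([m],X)\to([n],Y)$ are pairs $(\alpha,\theta)$, $\alpha\colon[m]\to[n]$ in $\Delta$, $\theta\colon X\Rightarrow Y\circ\alpha$ a natural transformation with every component in $C_+$; composition $(\beta,\varphi)\circ(\alpha,\theta)=(\beta\alpha,(\varphi\alpha)\circ\theta)$. *)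

(* Defs.v *)
From Stdlib Require Import ProofIrrelevance FunctionalExtensionality.
From mathcomp Require Import all_boot.
Set Implicit Arguments. Unset Strict Implicit. Unset Printing Implicit Defensive.

Record Cat := MkCat {
  ob :> Type;
  hom : ob -> ob -> Type;
  idm : forall x, hom x x;
  comp : forall x y z, hom y z -> hom x y -> hom x z;
  comp_id_l : forall x y (f : hom x y), comp (idm y) f = f;
  comp_id_r : forall x y (f : hom x y), comp f (idm x) = f;
  comp_assoc : forall x y z w (f : hom x y) (g : hom y z) (h : hom z w),
      comp (comp h g) f = comp h (comp g f) }.
Arguments hom {c} x y.
Arguments idm {c} x.
Arguments comp {c x y z} _ _.

Definition is_id (C : Cat) (x y : C) (f : hom x y) : Prop :=
  exists e : x = y, eq_rect x (fun z => hom x z) (idm x) y e = f.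
Arguments is_id {C x y} f.

Definition morclass (C : Cat) := forall x y : C, hom x y -> Prop.

Definition is_wide (C : Cat) (P : morclass C) : Prop :=
  (forall x : C, P x x (idm x)) /\
  (forall (x y z : C) (f : hom x y) (g : hom y z),
      P y z g -> P x y f -> P x z (comp g f)).

Record WideSub (C : Cat) := MkWideSub {
  wmem :> morclass C;
  wmem_wide : is_wide wmem }.
Arguments wmem {C} w x y _.

Definition reedy_lt (C : Cat) (Pm Pp : morclass C) (x y : C) : Prop :=
  (exists f : hom x y, Pp x y f /\ ~ is_id f) \/
  (exists f : hom y x, Pm y x f /\ ~ is_id f).

(* A Reedy structure (C_-, C_+) on C. Decidability of being an identity
   is a genuine (Type-valued) decision procedure, as in constructive math. *)
Record Reedy (C : Cat) (Pm Pp : morclass C) : Type := MkReedy {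
  reedy_wide_m : is_wide Pm;
  reedy_wide_p : is_wide Pp;
  reedy_fact : forall (x y : C) (f : hom x y),
      exists (z : C) (g : hom x z) (h : hom z y),
        Pm x z g /\ Pp z y h /\ comp h g = f;
  reedy_fact_uniq : forall (x y : C) (f : hom x y)
      (z : C) (g : hom x z) (h : hom z y) (z' : C) (g' : hom x z') (h' : hom z' y),
      Pm x z g -> Pp z y h -> comp h g = f ->
      Pm x z' g' -> Pp z' y h' -> comp h' g' = f ->
      existT (fun w => (hom x w * hom w y)%type) z (g, h) =
      existT (fun w => (hom x w * hom w y)%type) z' (g', h');
  reedy_dec_m : forall (x y : C) (f : hom x y), Pm x y f -> {is_id f} + {~ is_id f};
  reedy_dec_p : forall (x y : C) (f : hom x y), Pp x y f -> {is_id f} + {~ is_id f};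
  reedy_wf : well_founded (reedy_lt Pm Pp) }.
Arguments Reedy : clear implicits.

(* [n] = {0 < ... < n} is 'I_n.+1; morphisms are order-preserving maps. *)
Record dmap (m n : nat) := DMap {
  dfun :> 'I_m.+1 -> 'I_n.+1;
  dmono : forall i j : 'I_m.+1, (i <= j)%N -> (dfun i <= dfun j)%N }.

Definition did (n : nat) : dmap n n := @DMap n n (fun i => i) (fun i j h => h).

Definition dcomp (l m n : nat) (b : dmap m n) (a : dmap l m) : dmap l n :=
  @DMap l n (fun i => b (a i)) (fun i j h => dmono b (dmono a h)).

Definition dsurj (m n : nat) (s : dmap m n) : Prop := forall y, exists x, s x = y.
Definition dinj (m n : nat) (s : dmap m n) : Prop := injective s.

Section Gamma.
Variables (C : Cat) (Cm Cp : WideSub C).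

Record chain (n : nat) := Chain {
  cobj :> 'I_n.+1 -> C;
  cmor : forall i j : 'I_n.+1, (i <= j)%N -> hom (cobj i) (cobj j);
  cmor_id : forall (i : 'I_n.+1) (h : (i <= i)%N), cmor h = idm (cobj i);
  cmor_comp : forall (i j k : 'I_n.+1) (hij : (i <= j)%N) (hjk : (j <= k)%N) (hik : (i <= k)%N),
      cmor hik = comp (cmor hjk) (cmor hij);
  cmor_minus : forall (i j : 'I_n.+1) (h : (i <= j)%N), wmem Cm _ _ (cmor h) }.
Arguments cmor {n} _ {i j} _.
Arguments cmor_id {n} _ i h.
Arguments cmor_comp {n} _ {i j k} hij hjk hik.
Arguments cmor_minus {n} _ {i j} h.

Record gob := GOb { gn : nat; gX : chain gn }.

Record ghom (a b : gob) := GHom {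
  galpha : dmap (gn a) (gn b);
  gtheta : forall i, hom (gX a i) (gX b (galpha i));
  gtheta_plus : forall i, wmem Cp _ _ (gtheta i);
  gnat : forall (i j : 'I_(gn a).+1) (h : (i <= j)%N) (h' : (galpha i <= galpha j)%N),
      comp (gtheta j) (cmor (gX a) h) = comp (cmor (gX b) h') (gtheta i) }.
Arguments galpha {a b} _.
Arguments gtheta {a b} _ i.
Arguments gtheta_plus {a b} _ i.
Arguments gnat {a b} _ {i j} h h'.

Lemma gid_nat (a : gob) (i j : 'I_(gn a).+1) (h : (i <= j)%N) (h' : (did (gn a) i <= did (gn a) j)%N) :
  comp (idm (gX a j)) (cmor (gX a) h) = comp (cmor (gX a) h') (idm (gX a i)).
Proof. by rewrite comp_id_l comp_id_r (eq_irrelevance h h'). Qed.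

Definition gid (a : gob) : ghom a a :=
  @GHom a a (did (gn a)) (fun i => idm (gX a i))
    (fun i => (proj1 (wmem_wide Cp)) _) (@gid_nat a).

Lemma gcomp_nat (a b c : gob) (g : ghom b c) (f : ghom a b) (i j : 'I_(gn a).+1) (h : (i <= j)%N)
  (h' : (dcomp (galpha g) (galpha f) i <= dcomp (galpha g) (galpha f) j)%N) :
  comp (comp (gtheta g (galpha f j)) (gtheta f j)) (cmor (gX a) h) =
  comp (cmor (gX c) h') (comp (gtheta g (galpha f i)) (gtheta f i)).
Proof.
rewrite comp_assoc (gnat f h (dmono (galpha f) h)) -comp_assoc.
by rewrite (gnat g (dmono (galpha f) h) h') comp_assoc.
Qed.

Definition gcomp (a b c : gob) (g : ghom b c) (f : ghom a b) : ghom a c :=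
  @GHom a c (dcomp (galpha g) (galpha f))
    (fun i => comp (gtheta g (galpha f i)) (gtheta f i))
    (fun i => (proj2 (wmem_wide Cp)) _ _ _ _ _ (gtheta_plus g _) (gtheta_plus f i))
    (@gcomp_nat a b c g f).

Lemma ghom_ext (a b : gob) (al : dmap (gn a) (gn b)) t1 t2 p1 p2 n1 n2 :
  t1 = t2 -> @GHom a b al t1 p1 n1 = @GHom a b al t2 p2 n2.
Proof.
move=> e; subst t2.
have -> : p1 = p2 by apply: proof_irrelevance.
by have -> : n1 = n2 by apply: proof_irrelevance.
Qed.

Lemma gid_l (a b : gob) (f : ghom a b) : gcomp (gid b) f = f.
Proof.
case: f => [[al mo] t p n].
rewrite /gcomp /gid /dcomp /=.
have e : (fun (i j : 'I_(gn a).+1) (h : (i <= j)%N) => mo i j h) = mo by [].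
move: (@gcomp_nat _ _ _ _ _) => /= nn.
move: nn; rewrite e => nn.
apply: ghom_ext; apply: functional_extensionality_dep => i.
by rewrite comp_id_l.
Qed.

Lemma gid_r (a b : gob) (f : ghom a b) : gcomp f (gid a) = f.
Proof.
case: f => [[al mo] t p n].
rewrite /gcomp /gid /dcomp /=.
move: (@gcomp_nat _ _ _ _ _) => /= nn.
apply: ghom_ext; apply: functional_extensionality_dep => i.
by rewrite comp_id_r.
Qed.

Lemma gassoc (a b c d : gob) (f : ghom a b) (g : ghom b c) (h : ghom c d) :
  gcomp (gcomp h g) f = gcomp h (gcomp g f).
Proof.
rewrite /gcomp /dcomp /=.
move: (@gcomp_nat _ _ _ _ _) (@gcomp_nat _ _ _ _ _) => /= n1 n2.
apply: ghom_ext; apply: functional_extensionality_dep => i.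
by rewrite comp_assoc.
Qed.

Definition Gamma : Cat :=
  @MkCat gob ghom gid gcomp gid_l gid_r gassoc.

Definition restrict (b : gob) (m : nat) (s : dmap m (gn b)) : gob :=
  @GOb m (@Chain m (fun i => gX b (s i))
     (fun i j h => cmor (gX b) (dmono s h))
     (fun i h => cmor_id (gX b) _ _)
     (fun i j k hij hjk hik => cmor_comp (gX b) _ (dmono s hjk) _)
     (fun i j h => cmor_minus (gX b) _)).

Lemma canon_nat (b : gob) (m : nat) (s : dmap m (gn b)) (i j : 'I_m.+1) (h : (i <= j)%N)
  (h' : (s i <= s j)%N) :
  comp (idm (gX b (s j))) (cmor (gX (restrict s)) h) =
  comp (cmor (gX b) h') (idm (gX b (s i))).
Proof. by rewrite comp_id_l comp_id_r /= (eq_irrelevance (dmono s h) h'). Qed.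

Definition canon (b : gob) (m : nat) (s : dmap m (gn b)) : ghom (restrict s) b :=
  @GHom (restrict s) b s (fun i => idm (gX b (s i)))
    (fun i => (proj1 (wmem_wide Cp)) _) (@canon_nat b m s).

Definition GammaMinus : morclass Gamma :=
  fun (a b : gob) (f : ghom a b) =>
    exists s : dmap (gn a) (gn b), dsurj s /\
      exists e : restrict s = a,
        f = eq_rect (restrict s) (fun a' => ghom a' b) (canon s) a e.

Definition GammaPlus : morclass Gamma :=
  fun (a b : gob) (f : ghom a b) => dinj (galpha f).

End Gamma.

Arguments Gamma {C} Cm Cp.
Arguments GammaMinus {C} Cm Cp : rename.
Arguments GammaPlus {C} Cm Cp : rename.

(* Main.v *)
From Stdlib Require Import ProofIrrelevance FunctionalExtensionality.
Require Import Defs.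
From mathcomp Require Import all_boot zify.
Set Implicit Arguments. Unset Strict Implicit. Unset Printing Implicit Defensive.

Section Delta.

Lemma dinj_lt m n (f : dmap m n) : dinj f ->
  forall i j : 'I_m.+1, i < j -> f i < f j.
Proof.
move=> fi i j lij; rewrite ltn_neqAle dmono ?(ltnW lij) // andbT.
apply/negP=> /eqP/val_inj/fi E; by rewrite E ltnn in lij.
Qed.

Lemma dinj_ge m n (f : dmap m n) : dinj f -> forall i : 'I_m.+1, i <= f i.
Proof.
move=> fi [i Hi] /=; elim: i Hi => [|i IH] Hi //.
have Hi' : i < m.+1 by apply: ltnW.
apply: leq_ltn_trans (IH Hi') _; apply: dinj_lt => //.
Qed.

Lemma dinj_up m n (f : dmap m n) : dinj f ->
  forall d (i : 'I_m.+1), i + d = m -> f i + d <= n.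
Proof.
move=> fi; elim=> [|d IH] i Hd; first by rewrite addn0 -ltnS.
have Hi : i.+1 < m.+1 by move: Hd; lia.
have := IH (Ordinal Hi); rewrite /= addSnnS => /(_ Hd) H.
have L := dinj_lt fi (i := i) (j := Ordinal Hi) (ltnSn i).
move: H L; set a := nat_of_ord (f i); set b := nat_of_ord (f _); lia.
Qed.

Lemma dinj_le m n (f : dmap m n) : dinj f -> m <= n.
Proof.
move=> fi; have := dinj_up fi (m := m) (d := m) (i := ord0) (add0n m).
by move/(leq_trans _)->; rewrite // leq_addl.
Qed.

Lemma dinj_id m n (f : dmap m n) : dinj f -> m = n -> forall i, (f i : nat) = i.
Proof.
move=> fi Emn i; have H1 := dinj_ge fi i.
have Hd : i + (m - i) = m by have := ltn_ord i; lia.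
have H2 := dinj_up fi Hd.
move: H1 H2; have := ltn_ord i; set a := nat_of_ord (f i); set b := nat_of_ord i; lia.
Qed.

Lemma dsurj0 m n (s : dmap m n) : dsurj s -> (s ord0 : nat) = 0.
Proof.
move=> ss; have [x Hx] := ss ord0; apply/eqP; rewrite -leqn0.
by have := dmono s (leq0n x : (@ord0 m : nat) <= x); rewrite Hx.
Qed.

Lemma dsurjS m n (s : dmap m n) : dsurj s ->
  forall (i j : 'I_m.+1), j = i.+1 :> nat -> s j <= (s i).+1.
Proof.
move=> ss i j Ej; rewrite leqNgt; apply/negP=> H.
have Hv : (s i).+1 < n.+1 by exact: ltn_trans H (ltn_ord (s j)).
have [x Hx] := ss (Ordinal Hv).
case: (leqP x i) => hx.
  by have := dmono s hx; rewrite Hx /= ltnn.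
have : j <= x by rewrite Ej.
by move/(dmono s); rewrite Hx /= leqNgt H.
Qed.

Lemma dsurj_max m n (s : dmap m n) : dsurj s -> (s ord_max : nat) = n.
Proof.
move=> ss; have [x Hx] := ss ord_max; apply/eqP; rewrite eqn_leq -ltnS ltn_ord /=.
have := dmono s (leq_ord x : x <= (@ord_max m)); by rewrite Hx.
Qed.

Lemma dsurj_le m n (s : dmap m n) : dsurj s -> forall i : 'I_m.+1, s i <= i.
Proof.
move=> ss [i Hi] /=; elim: i Hi => [|i IH] Hi.
  have -> : Ordinal Hi = ord0 by apply: val_inj.
  by rewrite (dsurj0 ss).
have Hi' : i < m.+1 by apply: ltnW.
apply: leq_trans (dsurjS ss (i := Ordinal Hi') (j := Ordinal Hi) erefl) _.
by rewrite ltnS (IH Hi').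
Qed.

Lemma dsurj_lowdown m n (s : dmap m n) : dsurj s ->
  forall d (i : 'I_m.+1), i + d = m -> n <= s i + d.
Proof.
move=> ss; elim=> [|d IH] i Hd.
  have -> : i = ord_max by apply: val_inj; move: Hd; rewrite /= addn0.
  by rewrite addn0 (dsurj_max ss).
have Hi : i.+1 < m.+1 by move: Hd; lia.
have := IH (Ordinal Hi); rewrite /= addSnnS => /(_ Hd) H.
apply: leq_trans H _; rewrite addnS -addSn leq_add2r.
exact: (dsurjS ss (i := i) (j := Ordinal Hi) erefl).
Qed.

Lemma dsurj_ge m n (s : dmap m n) : dsurj s -> n <= m.
Proof.
move=> ss; have := dsurj_lowdown ss (d := m) (i := ord0) (add0n m).
by rewrite (dsurj0 ss).
Qed.

Lemma dsurj_id m n (s : dmap m n) : dsurj s -> m = n -> forall i, (s i : nat) = i.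
Proof.
move=> ss Emn i; have H1 := dsurj_le ss i.
have Hd : i + (m - i) = m by have := ltn_ord i; lia.
have H2 := dsurj_lowdown ss Hd.
move: H1 H2; have := ltn_ord i; set a := nat_of_ord (s i); set b := nat_of_ord i; lia.
Qed.

End Delta.


Lemma sorted_index_mono (S : seq nat) u v : sorted ltn S -> u \in S -> v \in S ->
  u <= v -> index u S <= index v S.
Proof.
move=> sS uS vS luv; rewrite leqNgt; apply/negP=> H.
have := @sorted_ltn_nth _ ltn ltn_trans 0 S sS (index v S) (index u S).
rewrite !inE !index_mem => /(_ vS uS H); rewrite !nth_index // => h.
by have := leq_trans h luv; rewrite ltnn.
Qed.

Lemma dfact m n (al : dmap m n) : exists k (s : dmap m k) (d : dmap k n),
  [/\ dsurj s, dinj d & forall i, d (s i) = al i].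
Proof.
pose img := [seq (al i : nat) | i <- enum 'I_m.+1].
pose S := [seq v <- iota 0 n.+1 | v \in img].
have sS : sorted ltn S by apply: sorted_filter; [exact: ltn_trans| exact: iota_ltn_sorted].
have uS : uniq S by rewrite filter_uniq // iota_uniq.
have inS : forall i, (al i : nat) \in S.
  move=> i; rewrite mem_filter mem_iota /= add0n ltn_ord andbT.
  by apply/mapP; exists i; rewrite ?mem_enum.
have Spos : 0 < size S by move: (inS ord0); case: (S).
pose k := (size S).-1.
have kS : k.+1 = size S by rewrite /k prednK.
have idx_lt : forall i, index ((al i : nat)) S < k.+1 by move=> i; rewrite kS index_mem.
have nth_lt : forall r : 'I_k.+1, nth 0 S r < n.+1.
  move=> r; have : nth 0 S r \in S by apply: mem_nth; rewrite -kS.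
  by rewrite mem_filter mem_iota add0n => /andP[_ /andP[]].
pose sf := fun i => (inord (index ((al i : nat)) S) : 'I_k.+1).
have sfE : forall i, (sf i : nat) = index ((al i : nat)) S by move=> i; rewrite inordK.
have sm : forall i j : 'I_m.+1, i <= j -> sf i <= sf j.
  move=> i j lij; rewrite !sfE; apply: sorted_index_mono => //; exact: dmono.
pose df := fun r : 'I_k.+1 => (inord (nth 0 S r) : 'I_n.+1).
have dfE : forall r, (df r : nat) = nth 0 S r by move=> r; rewrite inordK.
have dltm : forall r r' : 'I_k.+1, r < r' -> df r < df r'.
  move=> r r' lr; rewrite !dfE; apply: (@sorted_ltn_nth _ ltn ltn_trans 0 S sS) => //;
  by rewrite inE -kS.
have dm : forall r r' : 'I_k.+1, r <= r' -> df r <= df r'.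
  move=> r r'; rewrite leq_eqVlt => /orP[/eqP/val_inj->//|/dltm/ltnW//].
exists k, (DMap sm), (DMap dm); split.
- move=> r /=.
  have : nth 0 S r \in img.
    have : nth 0 S r \in S by apply: mem_nth; rewrite -kS.
    by rewrite mem_filter => /andP[].
  case/mapP=> i _ Ei; exists i; apply: ord_inj; rewrite /= sfE -Ei index_uniq //.
  by rewrite -kS.
- move=> r r' /= /(congr1 (@nat_of_ord _)); rewrite /= !dfE => /eqP; rewrite nth_uniq -?kS // => /eqP.
  exact: ord_inj.
- move=> i /=; apply: ord_inj; rewrite /= dfE sfE nth_index //.
Qed.

Lemma dfact_uniq m n k k' (s : dmap m k) (d : dmap k n) (s' : dmap m k') (d' : dmap k' n) :
  dsurj s -> dinj d -> dsurj s' -> dinj d' -> (forall i, d (s i) = d' (s' i)) ->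
  k = k' /\ (forall i, (s i : nat) = s' i).
Proof.
move=> ss di ss' di' E.
have Es : forall i, (s i : nat) = s' i.
  case=> i Hi; elim: i Hi => [|i IH] Hi.
    have -> : Ordinal Hi = ord0 by apply: val_inj.
    by rewrite (dsurj0 ss) (dsurj0 ss').
  have Hi' : i < m.+1 by apply: ltnW.
  have h1 := dsurjS ss (i := Ordinal Hi') (j := Ordinal Hi) erefl.
  have h2 := dsurjS ss' (i := Ordinal Hi') (j := Ordinal Hi) erefl.
  have l : Ordinal Hi' <= Ordinal Hi by rewrite /= leqnSn.
  have m1 := dmono s l; have m2 := dmono s' l.
  have IH' := IH Hi'.
  have eqv : (s (Ordinal Hi) == s (Ordinal Hi')) = (s' (Ordinal Hi) == s' (Ordinal Hi')).
    apply/eqP/eqP=> H.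
      by apply: di'; rewrite -!E H.
    by apply: di; rewrite !E H.
  move: eqv; rewrite -!(inj_eq val_inj) /=.
  move: h1 h2 m1 m2 IH'; set a := nat_of_ord (s _); set b := nat_of_ord (s _);
  set c := nat_of_ord (s' _); set e := nat_of_ord (s' _).
  case: eqP; case: eqP; lia.
split=> //.
have := Es ord_max; rewrite (dsurj_max ss) (dsurj_max ss') //.
Qed.


Definition inj_pair2 := ProofIrrelevance.ProofIrrelevanceTheory.EqdepTheory.inj_pair2.

Definition arr (C : Cat) := {x : C & {y : C & hom x y}}.
Definition tot (C : Cat) (x y : C) (f : hom x y) : arr C := existT _ x (existT _ y f).

Section CatLemmas.
Variable C : Cat.

Lemma tot_inj (x y : C) (f g : hom x y) : tot f = tot g -> f = g.
Proof. move=> H; exact: inj_pair2 (inj_pair2 H). Qed.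

Lemma tot_src (x y x' y' : C) (f : hom x y) (g : hom x' y') : tot f = tot g -> x = x'.
Proof. by move/(congr1 (@projT1 _ _)). Qed.

Lemma tot_tgt (x y x' y' : C) (f : hom x y) (g : hom x' y') : tot f = tot g -> y = y'.
Proof. by move/(congr1 (fun p : arr C => projT1 (projT2 p))). Qed.

Lemma tot_comp (x y z x' y' z' : C) (f : hom x y) (g : hom y z) (f' : hom x' y') (g' : hom y' z') :
  tot f = tot f' -> tot g = tot g' -> tot (Defs.comp g f) = tot (Defs.comp g' f').
Proof.
move=> H1 H2; have ex := tot_src H1; have ey := tot_tgt H1; have ez := tot_tgt H2.
subst x' y' z'; by rewrite (tot_inj H1) (tot_inj H2).
Qed.

Lemma tot_idr (x y z : C) (f : hom x y) (g : hom y z) :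
  tot f = tot (idm x) -> tot (Defs.comp g f) = tot g.
Proof.
move=> H; have ey := tot_tgt H; subst y; by rewrite (tot_inj H) comp_id_r.
Qed.

Lemma tot_idl (x y z : C) (f : hom x y) (g : hom y z) :
  tot g = tot (idm y) -> tot (Defs.comp g f) = tot f.
Proof.
move=> H; have ez := tot_tgt H; subst z; by rewrite (tot_inj H) comp_id_l.
Qed.

Lemma is_idE (x y : C) (f : hom x y) : is_id f <-> tot f = tot (idm x).
Proof.
split.
  by case=> e <-; case: y / e f.
move=> H; have e := tot_tgt H; subst y; exists erefl; by rewrite (tot_inj H).
Qed.

Lemma tot_eqrect_tgt (I : Type) (Y : I -> C) (x : C) (u v : I) (e : u = v) (t : hom x (Y u)) :
  tot (eq_rect u (fun w => hom x (Y w)) t v e) = tot t.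
Proof. by case: v / e. Qed.

Lemma mor_eqrect_tgt (P : morclass C) (I : Type) (Y : I -> C) (x : C) (u v : I) (e : u = v)
  (t : hom x (Y u)) : P _ _ t -> P _ _ (eq_rect u (fun w => hom x (Y w)) t v e).
Proof. by case: v / e. Qed.

End CatLemmas.

Section ReedyAux.
Variables (C : Cat) (Pm Pp : morclass C) (R : Reedy C Pm Pp).

Lemma uniq_aux (x x' y y' : C) (t : hom x y) (t' : hom x' y') (u : hom x x') :
  Pm u -> Pp t -> Pp t' -> tot (Defs.comp t' u) = tot t ->
  tot u = tot (idm x) /\ tot t' = tot t.
Proof.
move=> Pu Pt Pt' H; have ey := tot_tgt H; subst y'.
have H' := tot_inj H.
have := reedy_fact_uniq R Pu Pt' H' (proj1 (reedy_wide_m R) x) Pt (comp_id_r t).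
move=> E; split.
  by have := congr1 (fun p : {w : C & (hom x w * hom w y)%type} =>
     existT (fun a => {b : C & hom a b}) x (existT _ (projT1 p) (fst (projT2 p)))) E.
by have := congr1 (fun p : {w : C & (hom x w * hom w y)%type} =>
     existT (fun a => {b : C & hom a b}) (projT1 p) (existT _ y (snd (projT2 p)))) E.
Qed.

End ReedyAux.

Lemma tot_idr' (C : Cat) (x y z w : C) (f : hom x y) (g : hom y z) :
  tot f = tot (idm w) -> tot (Defs.comp g f) = tot g.
Proof. move=> H; have e := tot_src H; subst w; exact: tot_idr. Qed.

Lemma tot_idl' (C : Cat) (x y z w : C) (f : hom x y) (g : hom y z) :
  tot g = tot (idm w) -> tot (Defs.comp g f) = tot f.
Proof. move=> H; have e := tot_src H; subst w; exact: tot_idl. Qed.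


Lemma dmap_ext m n (a b : dmap m n) : (forall i, a i = b i) -> a = b.
Proof.
case: a => fa pa; case: b => fb pb /= H.
have E : fa = fb := functional_extensionality _ _ H.
subst fb; by rewrite (proof_irrelevance _ pa pb).
Qed.

Section GammaLemmas.
Variables (C : Cat) (Cm Cp : WideSub C).

Notation G := (Gamma Cm Cp).
Definition gtot (a b : gob Cm) (f : ghom Cp a b) : arr G := @tot G a b f.

Lemma cmor_tot_eq n (X : chain Cm n) (i j i' j' : 'I_n.+1) (h : i <= j) (h' : i' <= j') :
  i = i' -> j = j' -> tot (cmor X h) = tot (cmor X h').
Proof. move=> E1 E2; subst i' j'; by rewrite (eq_irrelevance h h'). Qed.

Lemma cmor_tot_id n (X : chain Cm n) (i j : 'I_n.+1) (h : i <= j) :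
  i = j -> tot (cmor X h) = tot (idm (X i)).
Proof. move=> E; subst j; by rewrite cmor_id. Qed.

Lemma gob_eq (a b : gob Cm) : gn a = gn b ->
  (forall (i j : 'I_(gn a).+1) (i' j' : 'I_(gn b).+1) (h : i <= j) (h' : i' <= j'),
     (i : nat) = i' -> (j : nat) = j' -> tot (cmor (gX a) h) = tot (cmor (gX b) h')) ->
  a = b.
Proof.
case: a => n X; case: b => n' Y /= En; subst n' => H.
have Eo : forall i, X i = Y i.
  move=> i; exact: (tot_src (H i i i i (leqnn _) (leqnn _) erefl erefl)).
case: X Eo H => cX mX pX1 pX2 pX3; case: Y => cY mY pY1 pY2 pY3 /= Eo H.
have E : cX = cY := functional_extensionality _ _ Eo. subst cY.
have E : mX = mY.
  apply: functional_extensionality_dep => i; apply: functional_extensionality_dep => j.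
  apply: functional_extensionality_dep => h; apply: tot_inj; exact: H.
subst mY.
rewrite (proof_irrelevance _ pX1 pY1) (proof_irrelevance _ pX2 pY2).
by rewrite (proof_irrelevance _ pX3 pY3).
Qed.

Lemma gob_obj (a b : gob Cm) : a = b -> forall (i : 'I_(gn a).+1) (i' : 'I_(gn b).+1),
  (i : nat) = i' -> gX a i = gX b i'.
Proof. by move=> <- i i' /ord_inj ->. Qed.

Lemma gob_cmor (a b : gob Cm) : a = b ->
  forall (i j : 'I_(gn a).+1) (i' j' : 'I_(gn b).+1) (h : i <= j) (h' : i' <= j'),
     (i : nat) = i' -> (j : nat) = j' -> tot (cmor (gX a) h) = tot (cmor (gX b) h').
Proof. move=> <- i j i' j' h h' /ord_inj E1 /ord_inj E2; exact: cmor_tot_eq. Qed.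

Lemma ghom_ext2 (a b : gob Cm) (f g : ghom Cp a b) :
  (forall i, galpha f i = galpha g i) -> (forall i, tot (gtheta f i) = tot (gtheta g i)) -> f = g.
Proof.
case: f => al t p nt; case: g => al' t' p' nt' /= Ha.
have E := dmap_ext Ha; subst al' => Ht.
have E : t = t'.
  apply: functional_extensionality_dep => i; apply: tot_inj; exact: Ht.
subst t'.
rewrite (proof_irrelevance _ p p'); by rewrite (proof_irrelevance _ nt nt').
Qed.

Lemma gtot_eq (a b a' b' : gob Cm) (f : ghom Cp a b) (f' : ghom Cp a' b') :
  a = a' -> b = b' ->
  (forall (i : 'I_(gn a).+1) (i' : 'I_(gn a').+1), (i : nat) = i' -> (galpha f i : nat) = galpha f' i') ->
  (forall (i : 'I_(gn a).+1) (i' : 'I_(gn a').+1), (i : nat) = i' -> tot (gtheta f i) = tot (gtheta f' i')) ->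
  gtot f = gtot f'.
Proof.
move=> Ea Eb; subst a' b' => H1 H2.
rewrite (@ghom_ext2 _ _ f f') // => i; [apply: ord_inj; exact: H1| exact: H2].
Qed.

Lemma gtot_inv (a b a' b' : gob Cm) (f : ghom Cp a b) (f' : ghom Cp a' b') :
  gtot f = gtot f' ->
  [/\ a = a', b = b',
      (forall (i : 'I_(gn a).+1) (i' : 'I_(gn a').+1), (i : nat) = i' -> (galpha f i : nat) = galpha f' i') &
      (forall (i : 'I_(gn a).+1) (i' : 'I_(gn a').+1), (i : nat) = i' -> tot (gtheta f i) = tot (gtheta f' i'))].
Proof.
move=> E; have Ea := tot_src E; have Eb := tot_tgt E; subst a' b'.
have E' := tot_inj E; subst f'.
by split => // i i' /ord_inj <-.
Qed.

Lemma gtot_eqrect (P a b : gob Cm) (f : ghom Cp P b) (e : P = a) :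
  gtot (eq_rect P (fun a' => ghom Cp a' b) f a e) = gtot f.
Proof. by case: a / e. Qed.

Lemma eqrect_of_gtot (P a b : gob Cm) (f : ghom Cp P b) (e : P = a) (g : ghom Cp a b) :
  gtot f = gtot g -> eq_rect P (fun a' => ghom Cp a' b) f a e = g.
Proof. move=> H; apply: (@tot_inj G); have := gtot_eqrect f e; rewrite /gtot => ->; exact: H. Qed.

Lemma minus_inv (a b : gob Cm) (f : ghom Cp a b) : GammaMinus Cm Cp a b f ->
  exists s : dmap (gn a) (gn b), [/\ dsurj s, restrict s = a,
    (forall i, galpha f i = s i) &
    (forall i, tot (gtheta f i) = tot (idm (gX b (s i))))].
Proof.
case=> s [ss [e ->]]; exists s.
have [_ _ H1 H2] := gtot_inv (gtot_eqrect (canon Cp s) e).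
split => // i; [apply: ord_inj; exact: H1 | exact: H2].
Qed.

End GammaLemmas.


Section Main.
Variables (C : Cat) (Cm Cp : WideSub C).
Notation G := (Gamma Cm Cp).

Lemma minus_wide : is_wide (GammaMinus Cm Cp).
Proof.
split.
  move=> x; exists (did (gn x)); split; first by move=> y; exists y.
  have e : restrict (did (gn x)) = x.
    apply: gob_eq => // i j i' j' h h' /ord_inj E1 /ord_inj E2; exact: cmor_tot_eq.
  exists e; symmetry; apply: eqrect_of_gtot; apply: gtot_eq => //.
  by move=> i i' /ord_inj ->.
move=> x y z f g Hg Hf.
have [s [ss ex Hfa Hft]] := minus_inv Hf.
have [s' [ss' ey Hga Hgt]] := minus_inv Hg.
exists (dcomp s' s); split.
  move=> r; have [y0 Hy0] := ss' r; have [x0 Hx0] := ss y0; exists x0; by rewrite /= Hx0.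
have e : restrict (dcomp s' s) = x.
  apply: gob_eq => // i j i' j' h h' E1 E2.
  have := gob_cmor ex h' h' erefl erefl; rewrite /= => <-.
  have := gob_cmor ey (dmono s h') (dmono s h') erefl erefl; rewrite /= => <-.
  apply: cmor_tot_eq; congr (s' (s _)); exact: ord_inj.
exists e; symmetry; apply: eqrect_of_gtot; apply: gtot_eq => //.
  by move=> i i' /ord_inj E; subst i'; rewrite /= Hfa Hga.
move=> i i' /ord_inj E; subst i'; rewrite /=.
rewrite (tot_idr' _ (Hft i)) Hgt Hfa //.
Qed.

Lemma plus_wide : is_wide (GammaPlus Cm Cp).
Proof.
split; first by move=> x i j.
move=> x y z f g Hg Hf i j /= E; apply: Hf; exact: Hg.
Qed.

End Main.


Section Fact.
Variables (C : Cat) (Cm Cp : WideSub C) (R : Reedy C (wmem Cm) (wmem Cp)).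
Notation G := (Gamma Cm Cp).

Lemma keyK (x y : gob Cm) (f : ghom Cp x y) (i j : 'I_(gn x).+1) (h : i <= j) :
  galpha f i = galpha f j ->
  tot (cmor (gX x) h) = tot (idm (gX x i)) /\ tot (gtheta f j) = tot (gtheta f i).
Proof.
move=> E.
have N := gnat (g:=f) h (dmono (galpha f) h).
have T : tot (Defs.comp (gtheta f j) (cmor (gX x) h)) = tot (gtheta f i).
  rewrite N; apply: tot_idl; exact: cmor_tot_id.
exact: (uniq_aux R (cmor_minus (gX x) h) (gtheta_plus f i) (gtheta_plus f j) T).
Qed.

Lemma fact_exists (x y : gob Cm) (f : ghom Cp x y) :
  exists (z : gob Cm) (g : ghom Cp x z) (h : ghom Cp z y),
    [/\ GammaMinus Cm Cp x z g, GammaPlus Cm Cp z y h & gcomp h g = f].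
Proof.
have [k [sg [dl [ss di E]]]] := dfact (galpha f).
pose X := gX x; pose Y := gX y.
pose sec (r : 'I_k.+1) : 'I_(gn x).+1 := odflt ord0 [pick i | sg i == r].
have secE : forall r, sg (sec r) = r.
  move=> r; rewrite /sec; case: pickP => [i /eqP //|H].
  have [i Hi] := ss r; by have := H i; rewrite Hi eqxx.
have secmono : forall r r' : 'I_k.+1, r <= r' -> sec r <= sec r'.
  move=> r r' lr; rewrite leqNgt; apply/negP=> H.
  have := dmono sg (ltnW H); rewrite !secE => lr'.
  have E' : r = r' by apply: ord_inj; apply/eqP; rewrite eqn_leq lr lr'.
  by move: H; rewrite E' ltnn.
have sgal : forall i j, sg i = sg j -> galpha f i = galpha f j.
  by move=> i j Eij; rewrite -!E Eij.
pose cZ := fun r => X (sec r).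
pose mZ := fun (r r' : 'I_k.+1) (h : r <= r') => cmor X (secmono r r' h).
have Zid : forall (r : 'I_k.+1) (h : r <= r), mZ r r h = idm (cZ r) by move=> r h; exact: cmor_id.
have Zcomp : forall (r r' r'' : 'I_k.+1) (h1 : r <= r') (h2 : r' <= r'') (h3 : r <= r''),
   mZ r r'' h3 = Defs.comp (mZ r' r'' h2) (mZ r r' h1) by move=> *; exact: cmor_comp.
have Zminus : forall (r r' : 'I_k.+1) (h : r <= r'), wmem Cm _ _ (mZ r r' h) by move=> *; exact: cmor_minus.
pose Z := @Chain _ Cm k cZ mZ Zid Zcomp Zminus.
pose zob := GOb Z.
have L0 : forall (p i j q : 'I_(gn x).+1) (hp : p <= i) (h : i <= j) (hq : j <= q) (hpq : p <= q),
    sg p = sg i -> sg j = sg q -> tot (cmor X h) = tot (cmor X hpq).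
  move=> p i j q hp h hq hpq E1 E2.
  have hpj := leq_trans hp h.
  rewrite (cmor_comp X hpj hq hpq) (cmor_comp X hp h hpj).
  rewrite (tot_idl' _ (proj1 (keyK hq (sgal _ _ E2)))).
  by rewrite (tot_idr' _ (proj1 (keyK hp (sgal _ _ E1)))).
have L : forall (i j i0 j0 : 'I_(gn x).+1) (h : i <= j) (h0 : i0 <= j0),
    sg i = sg i0 -> sg j = sg j0 -> tot (cmor X h) = tot (cmor X h0).
  move=> i j i0 j0 h h0 E1 E2.
  have [p [hp1 hp2 sp1 sp2]] : exists p : 'I_(gn x).+1, [/\ p <= i, p <= i0, sg p = sg i & sg p = sg i0].
    case: (leqP i i0) => H; [exists i | exists i0]; split => //; exact: ltnW.
  have [q [hq1 hq2 sq1 sq2]] : exists q : 'I_(gn x).+1, [/\ j <= q, j0 <= q, sg j = sg q & sg j0 = sg q].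
    case: (leqP j j0) => H; [exists j0 | exists j]; split => //; exact: ltnW.
  have hpq : p <= q := leq_trans hp1 (leq_trans h hq1).
  by rewrite (L0 _ _ _ _ hp1 h hq1 hpq) // (L0 _ _ _ _ hp2 h0 hq2 hpq).
have e : restrict (b := zob) sg = x.
  apply: gob_eq => // i j i' j' h h' /ord_inj E1 /ord_inj E2 /=.
  subst i' j'; rewrite /mZ; apply: L; by rewrite secE.
pose g := eq_rect _ (fun a' => ghom Cp a' zob) (canon Cp (b := zob) sg) x e.
have Eal : forall r, galpha f (sec r) = dl r by move=> r; rewrite -E secE.
pose th := fun r : 'I_k.+1 =>
  eq_rect _ (fun w => hom (X (sec r)) (Y w)) (gtheta f (sec r)) _ (Eal r).
have thP : forall r, wmem Cp _ _ (th r).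
  move=> r; apply: (@mor_eqrect_tgt C (wmem Cp)); exact: gtheta_plus.
have thN : forall (r r' : 'I_k.+1) (hr : r <= r') (h' : dl r <= dl r'),
    Defs.comp (th r') (cmor Z hr) = Defs.comp (cmor Y h') (th r).
  move=> r r' hr h'; apply: tot_inj.
  rewrite (@tot_comp _ _ _ _ _ _ _ _ _ (cmor X (secmono r r' hr)) (gtheta f (sec r'))) //;
    last by rewrite /th tot_eqrect_tgt.
  rewrite (gnat (g := f) (secmono r r' hr) (dmono (galpha f) (secmono r r' hr))).
  apply: tot_comp; first by rewrite /th tot_eqrect_tgt.
  apply: cmor_tot_eq; exact: Eal.
pose hh := @GHom _ _ Cp zob y dl th thP thN.
exists zob, g, hh; split.
- exists sg; split => //; by exists e.
- exact: di.
have [_ _ Hga Hgt] := gtot_inv (gtot_eqrect (canon Cp (b := zob) sg) e).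
apply: (@tot_inj G); apply: gtot_eq => //.
  move=> i i' /ord_inj <- /=; rewrite -E; congr (nat_of_ord (dl _)); apply: ord_inj; exact: Hga.
move=> i i' /ord_inj <- /=.
rewrite (tot_idr' _ (Hgt i i erefl)) /th tot_eqrect_tgt.
have -> : galpha g i = sg i by apply: ord_inj; exact: Hga.
case: (leqP (sec (sg i)) i) => H.
  by rewrite (proj2 (keyK H _)) // -!E secE.
by rewrite (proj2 (keyK (ltnW H) _)) // -!E secE.
Qed.

End Fact.


Section Uniq.
Variables (C : Cat) (Cm Cp : WideSub C).
Notation G := (Gamma Cm Cp).

Lemma fact_uniq (x y : gob Cm) (f : ghom Cp x y) (z : gob Cm) (g : ghom Cp x z) (h : ghom Cp z y)
  (z' : gob Cm) (g' : ghom Cp x z') (h' : ghom Cp z' y) :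
  GammaMinus Cm Cp x z g -> GammaPlus Cm Cp z y h -> gcomp h g = f ->
  GammaMinus Cm Cp x z' g' -> GammaPlus Cm Cp z' y h' -> gcomp h' g' = f ->
  existT (fun w => (ghom Cp x w * ghom Cp w y)%type) z (g, h) =
  existT (fun w => (ghom Cp x w * ghom Cp w y)%type) z' (g', h').
Proof.
move=> Hg Hh Ef Hg' Hh' Ef'; subst f.
have [s [ss ez Hga Hgt]] := minus_inv Hg.
have [s' [ss' ez' Hga' Hgt']] := minus_inv Hg'.
have Ea : forall i, galpha h (s i) = galpha h' (s' i).
  move=> i; have := congr1 (fun F => galpha F i) Ef'; rewrite /= Hga Hga' => ->//.
have [Ek Es] := dfact_uniq ss Hh ss' Hh' Ea.
have Ez : z = z'.
  apply: gob_eq => // r r' r0 r0' hr hr0 E1 E2.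
  have [i [j [hij [Ei Ej]]]] : exists (i j : 'I_(gn x).+1) (hij : i <= j), s i = r /\ s j = r'.
    have [i Ei] := ss r; have [j Ej] := ss r'.
    case: (leqP i j) => H; first by exists i, j, H.
    exists j, j, (leqnn _); split => //.
    have := dmono s (ltnW H); rewrite Ei Ej => H2.
    by apply: ord_inj; apply/eqP; rewrite eqn_leq H2 hr.
  rewrite -(cmor_tot_eq (gX z) (dmono s hij) hr Ei Ej).
  have := gob_cmor ez hij hij erefl erefl; rewrite /= => ->.
  have := gob_cmor ez' hij hij erefl erefl; rewrite /= => <-.
  by apply: cmor_tot_eq; apply: ord_inj; rewrite -?E1 -?E2 -Es ?Ei ?Ej.
subst z'.
have Es' : forall i, s i = s' i by move=> i; apply: ord_inj; exact: Es.
have -> : g = g'.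
  apply: ghom_ext2 => i; first by rewrite Hga Hga' Es'.
  by rewrite Hgt Hgt' Es'.
have -> // : h = h'.
have [_ _ Ha Ht] := gtot_inv (congr1 (@gtot _ _ _ _ _) Ef').
apply: ghom_ext2 => r; have [i <-] := ss r.
  have := Ha i i erefl; rewrite /= Hga Hga' -Es' => /ord_inj//.
have := Ht i i erefl; rewrite /=.
rewrite (tot_idr' _ (Hgt i)) (tot_idr' _ (Hgt' i)) Hga Hga' -Es' => //.
Qed.

End Uniq.


Section Dec.
Variables (C : Cat) (Cm Cp : WideSub C).
Notation G := (Gamma Cm Cp).

Lemma minus_id (a b : gob Cm) (f : ghom Cp a b) : GammaMinus Cm Cp a b f -> gn a = gn b ->
  gtot f = gtot (gid Cp a).
Proof.
move=> Hf En; have [s [ss ea Hfa Hft]] := minus_inv Hf.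
have sid := dsurj_id ss En.
have eb : b = a.
  apply: (gob_eq (esym En)).
  move=> i j i' j' h h' E1 E2.
  have := gob_cmor ea h' h' erefl erefl; rewrite /= => <-.
  by apply: cmor_tot_eq; apply: ord_inj; rewrite ?sid.
apply: gtot_eq => //.
  by move=> i i' /= <-; rewrite Hfa sid.
move=> i i' E /=; rewrite Hft.
by rewrite (gob_obj eb (i := s i) (i' := i')) // sid.
Qed.

Lemma plus_id (a b : gob Cm) (f : ghom Cp a b) : dinj (galpha f) -> gn a = gn b ->
  (forall i, tot (gtheta f i) = tot (idm (gX a i))) -> gtot f = gtot (gid Cp a).
Proof.
move=> Hf En Ht.
have aid := dinj_id Hf En.
have eb : b = a.
  apply: (gob_eq (esym En)).
  move=> i j i' j' h h' E1 E2.
  have := gnat (g := f) h' (dmono (galpha f) h').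
  move/(congr1 (@tot C _ _)).
  rewrite (tot_idl' _ (Ht j')) (tot_idr' _ (Ht i')) => ->.
  by apply: cmor_tot_eq; apply: ord_inj; rewrite aid.
apply: gtot_eq => //.
  by move=> i i' /= <-; rewrite aid.
move=> i i' /ord_inj <- /=; exact: Ht.
Qed.

End Dec.


Section Final.
Variables (C : Cat) (Cm Cp : WideSub C) (R : Reedy C (wmem Cm) (wmem Cp)).
Notation G := (Gamma Cm Cp).
Notation ltC := (reedy_lt (wmem Cm) (wmem Cp)).

Definition pbool (x y : gob Cm) (f : ghom Cp x y) (i : 'I_(gn x).+1) : bool :=
  if reedy_dec_p R (gtheta_plus f i) then true else false.

Lemma pboolP (x y : gob Cm) (f : ghom Cp x y) i :
  reflect (is_id (gtheta f i)) (pbool f i).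
Proof. rewrite /pbool; case: (reedy_dec_p _ _) => H; by constructor. Qed.

Lemma dec_m (x y : G) (f : hom x y) : GammaMinus Cm Cp x y f -> {is_id f} + {~ is_id f}.
Proof.
move=> Hf; case E: (gn x == gn y).
  left; apply/is_idE; exact: (minus_id Hf (eqP E)).
right => /is_idE H; have := tot_tgt H; move/(congr1 (@gn _ _)) => E'.
by rewrite E' eqxx in E.
Qed.

Lemma plus_nid (x y : gob Cm) (f : ghom Cp x y) : dinj (galpha f) -> gn x = gn y ->
  ~ is_id (f : hom (c := G) x y) -> exists i, ~ is_id (gtheta f i).
Proof.
move=> Hf En nid; case E2: [forall i, pbool f i].
  case: nid; apply/is_idE; apply: (plus_id Hf En) => i.
  by apply/is_idE; apply/pboolP; move/forallP: E2.
by move/negbT/forallPn: E2 => [i /pboolP Hi]; exists i.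
Qed.

Lemma dec_p (x y : G) (f : hom x y) : GammaPlus Cm Cp x y f -> {is_id f} + {~ is_id f}.
Proof.
move=> Hf; case E1: (gn x == gn y); last first.
  right => /is_idE H; have := tot_tgt H; move/(congr1 (@gn _ _)) => E'.
  by rewrite E' eqxx in E1.
case E2: [forall i, pbool f i].
  left; apply/is_idE; apply: (plus_id Hf (eqP E1)) => i.
  by apply/is_idE; apply/pboolP; move/forallP: E2.
right => /is_idE H; have [_ _ _ Ht] := gtot_inv (f' := gid Cp x) H.
move/negbT/forallPn: E2 => [j /pboolP Hj]; apply: Hj; apply/is_idE; exact: (Ht j j erefl).
Qed.

Definition Rk (F H : nat -> C) k :=
  (forall i, i < k -> F i = H i \/ ltC (F i) (H i)) /\ exists i, i < k /\ ltC (F i) (H i).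

Lemma Rk_wf k : well_founded (fun F H => Rk F H k).
Proof.
elim: k => [|k IH] G0.
  constructor=> F [_ [i [Hi _]]]; by rewrite ltn0 in Hi.
suff : forall a, Acc ltC a -> forall H, H k = a -> Acc (fun F H => Rk F H k.+1) H.
  by move/(_ (G0 k) (reedy_wf R (G0 k)) G0 erefl).
move=> a Aa; induction Aa as [a _ IHa] => Hh Ha.
have AG := IH Hh; revert Ha; induction AG as [Hh _ IHG] => Ha.
constructor => F [Hpt [i [Hi Hlt]]].
have case1 : ltC (F k) (Hh k) -> Acc (fun F H => Rk F H k.+1) F.
  move=> L; apply: (IHa (F k) _ F erefl); by rewrite -Ha.
case: (ltngtP i k) => [ik|ik|ik]; last by subst i; exact: case1.
  case: (Hpt k (ltnSn k)) => [Ek|Lk]; last exact: case1.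
  apply: IHG; last by rewrite Ek.
  split; last by exists i.
  by move=> j Hj; apply: Hpt; apply: ltnW.
by rewrite ltnS leqNgt ik in Hi.
Qed.

Definition meas (x : gob Cm) (i : nat) : C := gX x (inord i).

Lemma lt_gamma (x y : gob Cm) : reedy_lt (GammaMinus Cm Cp) (GammaPlus Cm Cp) x y ->
  gn x < gn y \/ (gn x = gn y /\ Rk (meas x) (meas y) (gn x).+1).
Proof.
case=> [[f [Hf nid]]|[f [Hf nid]]]; last first.
  left; have [s [ss _ _ _]] := minus_inv Hf.
  have := dsurj_ge ss; rewrite leq_eqVlt => /orP[/eqP E|//].
  by case: nid; apply/is_idE; exact: (minus_id Hf (esym E)).
have := dinj_le Hf; rewrite leq_eqVlt => /orP[/eqP En|]; last by left.
right; split => //.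
have aid := dinj_id Hf En.
have key : forall i0 : 'I_(gn x).+1,
    (is_id (gtheta f i0) -> meas x i0 = meas y i0) /\
    (~ is_id (gtheta f i0) -> ltC (meas x i0) (meas y i0)).
  move=> i0.
  have Ex : meas x i0 = gX x i0 by rewrite /meas inord_val.
  have Ey : meas y i0 = gX y (galpha f i0).
    rewrite /meas; congr (gX y _); apply: ord_inj; rewrite aid inordK //.
    by rewrite -En.
  rewrite Ex Ey; split.
    by move/is_idE/tot_tgt.
  move=> nid0; left; exists (gtheta f i0); split => //; exact: gtheta_plus.
split.
  move=> i Hi; have := key (Ordinal Hi); rewrite /=.
  case: (reedy_dec_p R (gtheta_plus f (Ordinal Hi))) => H [H1 H2]; [left|right]; auto.
have [i0 Hi0] := plus_nid Hf En nid.
exists i0; split => //; exact: (proj2 (key i0)).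
Qed.

Lemma gamma_wf : well_founded (reedy_lt (GammaMinus Cm Cp) (GammaPlus Cm Cp)).
Proof.
move=> y0.
suff : forall n (y : gob Cm), gn y = n -> Acc (reedy_lt (GammaMinus Cm Cp) (GammaPlus Cm Cp)) y.
  by move/(_ _ y0 erefl).
elim/ltn_ind => n IHn.
have inner : forall F, Acc (fun A B => Rk A B n.+1) F -> forall y : gob Cm, gn y = n -> meas y = F ->
    Acc (reedy_lt (GammaMinus Cm Cp) (GammaPlus Cm Cp)) y.
  move=> F AF; elim: AF => {}F _ IHF y En EF; constructor => x Hxy.
  case: (lt_gamma Hxy) => [H | [E HR]].
    by apply: (IHn (gn x)) => //; rewrite -En.
  apply: (IHF (meas x)) => //; last by rewrite E.
  by rewrite -EF -En -E.
move=> y En; exact: (inner (meas y) (Rk_wf _ _) y En erefl).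
Qed.

End Final.

Theorem proposition5p3 (C : Cat) (Cm Cp : WideSub C) :
  Reedy C (wmem Cm) (wmem Cp) -> Reedy (Gamma Cm Cp) (GammaMinus Cm Cp) (GammaPlus Cm Cp).
Proof.
move=> R; apply: MkReedy.
- exact: minus_wide.
- exact: plus_wide.
- move=> x y f; have [z [g [h [H1 H2 H3]]]] := fact_exists R f.
  by exists z, g, h.
- move=> x y f z g h z' g' h' H1 H2 H3 H4 H5 H6; exact: (fact_uniq H1 H2 H3 H4 H5 H6).
- exact: dec_m.
- exact: (dec_p R).
- exact: gamma_wf.
Qed.
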